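(* Let $U$ be a finite nonempty set, let $(T,I,N)$ be an IMTL triplet, let $\widetilde{R}$ be a $T$-preorder relation on $U$, and let $A$ be a fuzzy set on $U$. Then $A$ is granularly representable with respect to $\widetilde{R}$ if and only if for all $u,v\in U$ the granules $\widetilde{R}^+_{A(u)}(u)$ and $\widetilde{R}^-_{N(A(v))}(v)$ are $T$-disjoint.
   Context: A residual triplet $(T,I,N)$ consists of a left-continuous $t$-norm $T$, its residual implicator $I(x,y)=\sup\{\beta\in[0,1]: T(x,\beta)\le y\}$, and the induced negator $N(x)=I(x,0)$; it is an IMTL triplet if $N$ is involutive ($N(N(x))=x$ for all $x$). A fuzzy set on $U$ is a map $U\to[0,1]$; its complement is $coA(u)=N(A(u))$. A fuzzy relation $\widetilde{R}:U\times U\to[0,1]$ is a $T$-preorder if it is reflexive and $T$-transitive ($T(\widetilde{R}(u,v),\widetilde{R}(v,w))\le\widetilde{R}(u,w)$). Granules: $\widetilde{R}^+_\lambda(u)$ is the fuzzy set $w\mapsto T(\widetilde{R}(w,u),\lambda)$ and $\widetilde{R}^-_\lambda(u)$ is the fuzzy set $w\mapsto T(\widetilde{R}(u,w),\lambda)$. Two fuzzy sets $B,C$ are $T$-disjoint if $T(B(w),C(w))=0$ for all $w\in U$. A fuzzy set $A$ is granularly representable w.r.t. $\widetilde{R}$ if $T(\widetilde{R}(v,u),A(u))\le A(v)$ for all $u,v\in U$ (equivalently, $A(v)=\max_{u\in U}T(\widetilde{R}(v,u),A(u))$ for all $v$). *)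

(* Defs.v *)
From HB Require Import structures.
From mathcomp Require Import all_boot all_order all_algebra.
From mathcomp Require Import boolp classical_sets reals.
Set Implicit Arguments. Unset Strict Implicit. Unset Printing Implicit Defensive.
Import Order.TTheory GRing.Theory Num.Theory.
Local Open Scope ring_scope.
Local Open Scope classical_set_scope.

Section Fuzzy.
Variable R : realType.

Definition in01 (x : R) : Prop := 0 <= x <= 1.

Definition is_tnorm (T : R -> R -> R) : Prop :=
  [/\ (forall x y, in01 x -> in01 y -> in01 (T x y)),
      (forall x y, in01 x -> in01 y -> T x y = T y x),
      (forall x y z, in01 x -> in01 y -> in01 z -> T x (T y z) = T (T x y) z),
      (forall x x' y, in01 x -> in01 x' -> in01 y -> x <= x' -> T x y <= T x' y)
    & (forall x, in01 x -> T x 1 = x)].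

(* left-continuity in the first argument (equivalently in both, by commutativity) *)
Definition left_continuous (T : R -> R -> R) : Prop :=
  forall x y, in01 x -> in01 y -> 0 < x ->
  forall e : R, 0 < e -> exists2 d : R, 0 < d &
    forall z, in01 z -> x - d < z -> z <= x -> T x y - e < T z y.

Definition residual (T : R -> R -> R) (x y : R) : R :=
  sup [set b | in01 b /\ T x b <= y].

Definition negator (T : R -> R -> R) (x : R) : R := residual T x 0.

Definition IMTL_tnorm (T : R -> R -> R) : Prop :=
  [/\ is_tnorm T, left_continuous T
    & forall x, in01 x -> negator T (negator T x) = x].

Variable U : finType.

Definition fuzzy_set (A : U -> R) : Prop := forall u, in01 (A u).
Definition fuzzy_rel (Rl : U -> U -> R) : Prop := forall u v, in01 (Rl u v).

Definition T_preorder (T : R -> R -> R) (Rl : U -> U -> R) : Prop :=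
  (forall u, Rl u u = 1) /\
  (forall u v w, T (Rl u v) (Rl v w) <= Rl u w).

Definition granule_plus (T : R -> R -> R) (Rl : U -> U -> R) (lam : R) (u : U)
  : U -> R := fun w => T (Rl w u) lam.
Definition granule_minus (T : R -> R -> R) (Rl : U -> U -> R) (lam : R) (u : U)
  : U -> R := fun w => T (Rl u w) lam.

Definition T_disjoint (T : R -> R -> R) (B C : U -> R) : Prop :=
  forall w, T (B w) (C w) = 0.

Definition gran_repr (T : R -> R -> R) (Rl : U -> U -> R) (A : U -> R) : Prop :=
  forall u v, T (Rl v u) (A u) <= A v.

End Fuzzy.

(* Main.v *)
Require Import Defs.
From HB Require Import structures.
From mathcomp Require Import all_boot all_order all_algebra.
From mathcomp Require Import boolp classical_sets reals.
Set Implicit Arguments. Unset Strict Implicit.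
Import Order.TTheory GRing.Theory Num.Theory.
Local Open Scope ring_scope.

Section Aux.
Variable R : realType.
Variable T : R -> R -> R.
Hypothesis hT : is_tnorm T.
Hypothesis hlc : left_continuous T.

Lemma in01_0 : in01 (0 : R). Proof. by rewrite /in01 lexx ler01. Qed.
Lemma in01_1 : in01 (1 : R). Proof. by rewrite /in01 lexx ler01. Qed.

Lemma T_in x y : in01 x -> in01 y -> in01 (T x y).
Proof. by case: hT => h _ _ _ _; apply: h. Qed.
Lemma T_C x y : in01 x -> in01 y -> T x y = T y x.
Proof. by case: hT => _ h _ _ _; apply: h. Qed.
Lemma T_A x y z : in01 x -> in01 y -> in01 z -> T x (T y z) = T (T x y) z.
Proof. by case: hT => _ _ h _ _; apply: h. Qed.
Lemma T_monl x x' y : in01 x -> in01 x' -> in01 y -> x <= x' -> T x y <= T x' y.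
Proof. by case: hT => _ _ _ h _; apply: h. Qed.
Lemma T_1 x : in01 x -> T x 1 = x.
Proof. by case: hT => _ _ _ _ h; apply: h. Qed.
Lemma T_monr x y y' : in01 x -> in01 y -> in01 y' -> y <= y' -> T x y <= T x y'.
Proof.
move=> hx hy hy' le; rewrite (T_C hx hy) (T_C hx hy'); exact: T_monl.
Qed.
Lemma T_0 x : in01 x -> T x 0 = 0.
Proof.
move=> hx; apply/eqP; rewrite eq_le; apply/andP; split.
  have := T_monl hx in01_1 in01_0 (proj2 (andP hx)).
  by rewrite (T_C in01_1 in01_0) (T_1 in01_0).
by case/andP: (T_in hx in01_0).
Qed.

Lemma hs x y : in01 x -> in01 y -> has_sup [set b | in01 b /\ T x b <= y].
Proof.
move=> hx hy; split.
  exists 0; split; first exact: in01_0.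
  by rewrite T_0 //; case/andP: hy.
by exists 1 => b [/andP[_ ->] _].
Qed.

Lemma res_in x y : in01 x -> in01 y -> in01 (residual T x y).
Proof.
move=> hx hy; apply/andP; split.
  apply: (sup_upper_bound (hs hx hy)); split; first exact: in01_0.
  by rewrite T_0 //; case/andP: hy.
apply: ge_sup; first by case: (hs hx hy).
by move=> b [/andP[_ ->] _].
Qed.

Lemma res_attained x y : in01 x -> in01 y -> T x (residual T x y) <= y.
Proof.
move=> hx hy; set s := residual T x y.
have hs01 := res_in hx hy; rewrite -/s in hs01.
rewrite (T_C hx hs01).
rewrite leNgt; apply/negP => lt.
case: (eqVneq s 0) => [s0|sn0].
  move: lt; rewrite s0 (T_C in01_0 hx) (T_0 hx).
  by case/andP: hy => hy _; rewrite ltNge hy.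
have spos : 0 < s by rewrite lt0r sn0; case/andP: hs01.
have e0 : 0 < T s x - y by rewrite subr_gt0.
have [d d0 hd] := hlc hs01 hx spos e0.
have [b [hb01 hb] hbs] := sup_adherent d0 (hs hx hy).
have bs : b <= s by apply: (sup_upper_bound (hs hx hy)).
have := hd b hb01 hbs bs.
rewrite (T_C hb01 hx) opprB addrCA subrr addr0 => h.
by move: (lt_le_trans h hb); rewrite ltxx.
Qed.

Lemma adj x b y : in01 x -> in01 b -> in01 y ->
  (T x b <= y <-> b <= residual T x y).
Proof.
move=> hx hb hy; split => h.
  by apply: (sup_upper_bound (hs hx hy)).
apply: le_trans (res_attained hx hy).
by apply: T_monr => //; apply: res_in.
Qed.

End Aux.

Theorem proposition4 (R : realType) (U : finType) (hU : (0 < #|U|)%N)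
  (T : R -> R -> R) (Rl : U -> U -> R) (A : U -> R) :
  IMTL_tnorm T -> fuzzy_rel Rl -> T_preorder T Rl -> fuzzy_set A ->
  (gran_repr T Rl A <->
   forall u v : U,
     T_disjoint T (granule_plus T Rl (A u) u)
                  (granule_minus T Rl (negator T (A v)) v)).
Proof.
case=> hT hlc hinv hR [refl trans] hA.
have Tin := T_in hT.
have N_in : forall a, in01 a -> in01 (negator T a).
  by move=> a ha; apply: (res_in hT) => //; apply: in01_0.
have TN0 : forall a, in01 a -> T a (negator T a) = 0.
  move=> a ha; apply/eqP; rewrite eq_le; apply/andP; split.
    by apply/(adj hT hlc ha (N_in a ha) (@in01_0 R)).
  by case/andP: (Tin _ _ ha (N_in a ha)).
have N_anti : forall a b, in01 a -> in01 b -> a <= b -> negator T b <= negator T a.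
  move=> a b ha hb ab; apply/(adj hT hlc ha (N_in b hb) (@in01_0 R)).
  by rewrite -(TN0 b hb); apply: (T_monl hT) => //; apply: N_in.
have N_refl : forall b c, in01 b -> in01 c -> negator T b <= negator T c -> c <= b.
  move=> b c hb hc le; rewrite -(hinv b hb) -(hinv c hc).
  by apply: N_anti => //; apply: N_in.
have h0 := @in01_0 R.
split.
- move=> gr u v w; rewrite /granule_plus /granule_minus.
  have hN := N_in _ (hA v).
  apply/eqP; rewrite eq_le; apply/andP; split; last first.
    by case/andP: (Tin _ _ (Tin _ _ (hR w u) (hA u)) (Tin _ _ (hR v w) hN)).
  apply: le_trans (_ : T (A w) (T (Rl v w) (negator T (A v))) <= _).
    by apply: (T_monl hT) => //; auto.
  rewrite (T_A hT) // (T_C hT (hA w) (hR v w)).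
  rewrite -(TN0 _ (hA v)); apply: (T_monl hT) => //; auto.
- move=> H u v.
  have hN := N_in _ (hA v).
  have := H u v u; rewrite /T_disjoint /granule_plus /granule_minus refl (T_C hT (@in01_1 R) (hA u)) (T_1 hT (hA u)).
  rewrite (T_A hT) // (T_C hT (hA u) (hR v u)) => H0.
  have hc := Tin _ _ (hR v u) (hA u).
  apply: N_refl => //.
  apply/(adj hT hlc hc hN h0); by rewrite H0.
Qed.
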